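(* Let $0<\epsilon\le 1/2$. Then $r_{\mathrm{bif}}(-\epsilon)\le 1/4+\epsilon-\epsilon^2$.
   Context: $f_c(z)=z^2+c$, extended to $\widehat{\mathbb{C}}$ by $f_c(\infty)=\infty$. For $c\in\mathbb{C}$, $r\ge0$, $G_{c,r}$ is the semigroup under composition generated by $\{f_{c'}:|c'-c|\le r\}$. A minimal set of a polynomial semigroup $G$ is a minimal element, with respect to inclusion, of the family of non-empty compact $L\subset\widehat{\mathbb{C}}$ with $g(L)\subset L$ for all $g\in G$; it is planar if $\infty\notin L$. The bifurcation radius $r_{\mathrm{bif}}(c)$ is the supremum of those $r\ge0$ for which $G_{c,r}$ has a planar minimal set (equivalently the infimum of those $r\ge0$ for which $G_{c,r}$ has no planar minimal set); by prior work this value is attained and $G_{c,r}$ has a planar minimal set iff $r\le r_{\mathrm{bif}}(c)$. *)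

(* Defs.v *)
(* The complex plane is mathcomp-real-closed's
   [complex R] (= R[i]) for R : realType, with its numField norm topology;
   the Riemann sphere is mathcomp-analysis' one-point compactification,
   [None] playing the role of infinity. *)
From HB Require Import structures.
From mathcomp Require Import all_boot all_order all_algebra.
From mathcomp Require Import all_classical all_reals all_analysis.
From mathcomp Require Import complex.
Set Implicit Arguments. Unset Strict Implicit. Unset Printing Implicit Defensive.
Import Order.TTheory GRing.Theory Num.Theory.
Import numFieldNormedType.Exports.
Local Open Scope classical_set_scope.
Local Open Scope ring_scope.
Local Open Scope complex_scope.

Notation Chat R := (one_point_compactification (GRing.regular (complex R))).

Definition fquad (R : realType) (c : R[i]) (z : Chat R) : Chat R :=
  match z with
  | Some w => Some (w ^+ 2 + c)
  | None => None
  end.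

Inductive gen_semigroup (T : Type) (gens : set (T -> T)) : (T -> T) -> Prop :=
  | gs_gen g : gens g -> gen_semigroup gens g
  | gs_comp g h : gen_semigroup gens g -> gen_semigroup gens h ->
                  gen_semigroup gens (g \o h).

Definition Gcr (R : realType) (c : R[i]) (r : R) : (Chat R -> Chat R) -> Prop :=
  gen_semigroup [set fquad c' | c' in [set c' : R[i] | `|c' - c| <= r%:C]].

Definition G_invariant (T : Type) (G : (T -> T) -> Prop) (L : set T) : Prop :=
  forall g, G g -> g @` L `<=` L.

Definition inv_compact (R : realType) (G : (Chat R -> Chat R) -> Prop)
  (L : set (Chat R)) : Prop :=
  L !=set0 /\ compact L /\ G_invariant G L.

Definition minimal_set (R : realType) (G : (Chat R -> Chat R) -> Prop)
  (L : set (Chat R)) : Prop :=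
  inv_compact G L /\ (forall K, inv_compact G K -> K `<=` L -> K = L).

Definition planar (R : realType) (L : set (Chat R)) : Prop := ~ L None.

Definition has_planar_minimal_set (R : realType) (c : R[i]) (r : R) : Prop :=
  exists L, minimal_set (Gcr c r) L /\ planar L.

Definition r_bif (R : realType) (c : R[i]) : \bar R :=
  ereal_sup [set r%:E | r in [set r : R | 0 <= r /\ has_planar_minimal_set c r]].

(* Main.v *)
Require Import Defs.
From HB Require Import structures.
From mathcomp Require Import all_boot all_order all_algebra.
From mathcomp Require Import all_classical all_reals all_analysis.
From mathcomp Require Import complex.
From mathcomp Require Import ring lra.
Import Order.TTheory GRing.Theory Num.Theory.
Import numFieldNormedType.Exports.
Local Open Scope classical_set_scope.
Local Open Scope ring_scope.
Local Open Scope complex_scope.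

Lemma sqc (R : realType) (x y : R) : (x +i* y) ^+ 2 = (x ^+ 2 - y ^+ 2) +i* (2 * x * y).
Proof. rewrite expr2 /=. apply/eqP; rewrite eq_complex /=; apply/andP; split; apply/eqP; ring. Qed.

Lemma addc_eq (R : realType) (x y p q : R) : (x +i* y) + (p +i* q) = (x + p) +i* (y + q).
Proof. by []. Qed.

Lemma valid_of (R : realType) (eps r : R) (c' : R[i]) : 0 <= r ->
  (complex.Re c' + eps) ^+ 2 + (complex.Im c') ^+ 2 <= r ^+ 2 ->
  `|c' - (- eps)%:C| <= r%:C.
Proof.
case: c' => a b /= r0 h.
rewrite normc_def lecR /= -(ger0_norm r0) -sqrtr_sqr ler_sqrt ?sqr_ge0 //.
by rewrite opprK subr0.
Qed.

Lemma final_contra (R : realType) (M d : R) (g : nat -> R) : 0 < d ->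
  (forall k, k%:R * d <= g k /\ g k ^+ 2 <= M) -> False.
Proof.
move=> d0 H.
pose M' := Num.max M 1.
have hM1 : 1 <= M' by rewrite le_max lexx orbT.
have hM : M <= M' by rewrite le_max lexx.
have := truncnS_gt (M' / d).
set k := (Num.truncn (M' / d)).+1 => hk.
have [h1 h2] := H k.
have : M' < k%:R * d by rewrite -ltr_pdivrMr.
move=> h3.
nra.
Qed.

Lemma bounded_L (R : realType) (L : set (Chat R)) :
  compact L -> ~ L None ->
  exists M : R, forall z : R[i], L (Some z) -> complex.Re z ^+ 2 + complex.Im z ^+ 2 <= M.
Proof.
rewrite compact_cover => hC hN.
pose f (n : nat) : set (Chat R) := Some @` (ball (0 : GRing.regular R[i]) n%:R).
have fo : forall i, setT i -> open (f i).
  move=> i _; apply: one_point_compactification_open_some; exact: ball_open.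
have Lc : L `<=` cover setT f.
  case=> [z|] Lz; last by [].
  exists (Num.truncn (Num.sqrt (complex.Re z ^+ 2 + complex.Im z ^+ 2))).+1 => //.
  exists z => //.
  rewrite -ball_normE /= sub0r normrN normc_def.
  rewrite -(rmorph_nat (real_complex R)) ltcR.
  exact: truncnS_gt.
have [D' _ HD] := hC nat setT f fo Lc.
exists (((\max_(i <- finmap.enum_fset D') i)%N)%:R ^+ 2) => z Lz.
have [i Di] := HD _ Lz.
case=> y + [yz]; subst y.
rewrite -ball_normE /= sub0r normrN normc_def.
rewrite -(rmorph_nat (real_complex R)) ltcR => hlt.
have hi : (i <= \max_(i <- finmap.enum_fset D') i)%N by apply: leq_bigmax_seq.
have hN0 : 0 <= complex.Re z ^+ 2 + complex.Im z ^+ 2 by rewrite addr_ge0 // sqr_ge0.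
rewrite -(sqr_sqrtr hN0).
apply: lerXn2r => //; rewrite ?nnegrE ?sqrtr_ge0 //.
apply: (le_trans (ltW hlt)); by rewrite ler_nat.
Qed.

Section Main.
Variables (R : realType) (eps r M : R) (L : set (Chat R)).
Hypothesis Hinv : forall (z c' : R[i]),
  (complex.Re c' + eps) ^+ 2 + (complex.Im c') ^+ 2 <= r ^+ 2 ->
  L (Some z) -> L (Some (z ^+ 2 + c')).
Hypothesis HM : forall z : R[i], L (Some z) ->
  complex.Re z ^+ 2 + complex.Im z ^+ 2 <= M.
Hypothesis eps0 : 0 < eps.

Lemma ray_case : eps <= r -> 1 / 4 < r -> L (Some 0) -> False.
Proof.
move=> er r4 L0.
pose b := Num.sqrt 3 / 2 : R.
have hb : b ^+ 2 = 3 / 4.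
  by rewrite /b expr_div_n sqr_sqrtr //; lra.
have b0 : 0 <= b by rewrite /b divr_ge0 // sqrtr_ge0.
clearbody b.
pose p1 (t : R) : R[i] := (- (t / 2)) +i* (t * b).
pose p2 (t : R) : R[i] := (- (t / 2)) +i* (- (t * b)).
have her : eps * eps <= eps * r by rewrite ler_pM2l.
have v1 : (complex.Re (p1 r) + eps) ^+ 2 + (complex.Im (p1 r)) ^+ 2 <= r ^+ 2.
  rewrite /= !exprMn hb; nra.
have v2 : (complex.Re (p2 r) + eps) ^+ 2 + (complex.Im (p2 r)) ^+ 2 <= r ^+ 2.
  rewrite /= sqrrN !exprMn hb; nra.
have s1 t : p1 t ^+ 2 + p2 r = p2 (t ^+ 2 + r).
  rewrite /p1 /p2 sqc addc_eq; congr (_ +i* _).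
    rewrite !exprMn hb; lra.
  change (2 * - (t / 2) * (t * b) - r * b = - ((t ^+ 2 + r) * b) :> R). field; lra.
have s2 t : p2 t ^+ 2 + p1 r = p1 (t ^+ 2 + r).
  rewrite /p1 /p2 sqc addc_eq; congr (_ +i* _).
    rewrite !sqrrN !exprMn hb; lra.
  field; lra.
have base : L (Some (p1 r)) /\ L (Some (p2 r)).
  have z2 : (0 : R[i]) ^+ 2 = 0 by rewrite expr2 mul0r.
  split; [have := Hinv _ _ v1 L0 | have := Hinv _ _ v2 L0]; by rewrite z2 add0r.
have ind k : exists t, [/\ 0 <= t, r + k%:R * (r - 1 / 4) <= t,
    L (Some (p1 t)) & L (Some (p2 t))].
  elim: k => [|k [t [t0 tk l1 l2]]].
    by exists r; split; [lra | rewrite mulr0n mul0r addr0 | case: base | case: base].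
  exists (t ^+ 2 + r); split.
  - nra.
  - have := sqr_ge0 (t - 1 / 2); move=> hsq; rewrite -[k.+1]addn1 natrD mulrDl mul1r; nra.
  - by rewrite -s2; apply: Hinv.
  - by rewrite -s1; apply: Hinv.
have nt t : complex.Re (p1 t) ^+ 2 + complex.Im (p1 t) ^+ 2 = t ^+ 2.
  rewrite /= sqrrN !exprMn hb; lra.
apply: (@final_contra R M (r - 1 / 4) (fun k => projT1 (cid (ind k)))); first lra.
move=> k; case: (cid (ind k)) => t [t0 tk l1 l2] /=; split; first lra.
by rewrite -nt; apply: HM.
Qed.

Lemma maxstep (x y : R) : 0 <= r -> L (Some (x +i* y)) ->
  0 < (x ^+ 2 - y ^+ 2 - eps) ^+ 2 + (2 * x * y) ^+ 2 ->
  exists z', L (Some z') /\ complex.Re z' ^+ 2 + complex.Im z' ^+ 2 =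
     (Num.sqrt ((x ^+ 2 - y ^+ 2 - eps) ^+ 2 + (2 * x * y) ^+ 2) + r) ^+ 2.
Proof.
move=> r0 Lz.
set a := x ^+ 2 - y ^+ 2 - eps; set bb := 2 * x * y => hp.
set n := Num.sqrt _.
have hn : n ^+ 2 = a ^+ 2 + bb ^+ 2 by rewrite sqr_sqrtr // ltW.
have n0 : 0 < n by rewrite sqrtr_gt0.
have nn0 : n != 0 by rewrite gt_eqF.
clearbody n.
pose c' : R[i] := (- eps + r * a / n) +i* (r * bb / n).
have v : (complex.Re c' + eps) ^+ 2 + (complex.Im c') ^+ 2 <= r ^+ 2.
  rewrite /= (_ : (- eps + r * a / n + eps) ^+ 2 + (r * bb / n) ^+ 2 =
     r ^+ 2 * (a ^+ 2 + bb ^+ 2) / n ^+ 2); last by field.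
  by rewrite -hn mulfK // expf_neq0.
exists ((x ^+ 2 - y ^+ 2 + (- eps + r * a / n)) +i* (2 * x * y + r * bb / n)); split.
  have := Hinv _ _ v Lz; by rewrite sqc addc_eq.
rewrite /= (_ : x ^+ 2 - y ^+ 2 + (- eps + r * a / n) = a * ((n + r) / n)); last first.
  by rewrite /a; field.
rewrite (_ : 2 * x * y + r * bb / n = bb * ((n + r) / n)); last first.
  by rewrite /bb; field.
rewrite (_ : (a * ((n + r) / n)) ^+ 2 + (bb * ((n + r) / n)) ^+ 2 = (a ^+ 2 + bb ^+ 2) * ((n + r) / n) ^+ 2); last by field.
by rewrite -hn; field.
Qed.

Lemma delta_pos : eps <= 1 / 2 -> 1 / 4 + eps - eps ^+ 2 < r -> 0 < 4 * r ^+ 2 - r - eps.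
Proof.
move=> e2 hr.
set A := 1 / 4 + eps - eps ^+ 2 in hr.
have e1 : 0 <= 1 - eps by lra.
have hA : 1 / 4 <= A.
  rewrite /A; have := mulr_ge0 (ltW eps0) e1; rewrite expr2; nra.
have h1 : 0 < (r - A) * (4 * (r + A) - 1) by apply: mulr_gt0; lra.
have h2 : 0 <= eps ^+ 2 * ((1 - 2 * eps) * (3 - 2 * eps)).
  by apply: mulr_ge0; [apply: sqr_ge0 | apply: mulr_ge0; lra].
have h3 : A * (4 * A - 1) - eps = eps ^+ 2 * ((1 - 2 * eps) * (3 - 2 * eps)) by rewrite /A; field; lra.
nra.
Qed.

Lemma big_case : eps <= 1 / 2 -> 1 / 4 + eps - eps ^+ 2 < r ->
  forall x0 y0, L (Some (x0 +i* y0)) ->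
  r ^+ 2 < (x0 ^+ 2 - y0 ^+ 2 - eps) ^+ 2 + (2 * x0 * y0) ^+ 2 -> False.
Proof.
move=> e2 hr x0 y0 L0 big.
have d0 := delta_pos e2 hr.
set d := 4 * r ^+ 2 - r - eps in d0.
have r4 : 1 / 4 < r.
  have e1 : 0 <= 1 - eps by lra.
  have := mulr_ge0 (ltW eps0) e1; rewrite expr2 in hr; nra.
have r0 : 0 < r by lra.
have ind k : exists t x y, [/\ L (Some (x +i* y)), x ^+ 2 + y ^+ 2 = t ^+ 2, 0 <= t &
    2 * r + k%:R * d <= t].
  elim: k => [|k [t [x [y [Lz ht t0 tk]]]]].
    have [z' [Lz' hz']] := maxstep _ _ (ltW r0) L0 (lt_trans (exprn_gt0 2 r0) big).
    set n := Num.sqrt _ in hz'.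
    have hn : r < n.
      by rewrite /n -{1}(ger0_norm (ltW r0)) -sqrtr_sqr ltr_sqrt //; exact: lt_trans (exprn_gt0 2 r0) big.
    move: z' Lz' hz' => [x y] Lz' hz'.
    exists (n + r), x, y; split => //.
    - lra.
    - rewrite mul0r addr0; lra.
  have hid : (x ^+ 2 - y ^+ 2 - eps) ^+ 2 + (2 * x * y) ^+ 2 =
     (x ^+ 2 + y ^+ 2 - eps) ^+ 2 + 4 * eps * y ^+ 2 by ring.
  have t2 : 2 * r <= t by have := mulr_ge0 (ler0n R k) (ltW d0); lra.
  have te : 0 < t ^+ 2 - eps.
    have h4 : (2 * r) * (2 * r) <= t * t by apply: ler_pM; lra.
    move: d0; rewrite /d !expr2; lra.
  have hge : (t ^+ 2 - eps) ^+ 2 <= (x ^+ 2 - y ^+ 2 - eps) ^+ 2 + (2 * x * y) ^+ 2.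
    rewrite hid ht; have := mulr_ge0 (ltW eps0) (sqr_ge0 y); lra.
  have [z' [Lz' hz']] := maxstep _ _ (ltW r0) Lz (lt_le_trans (exprn_gt0 2 te) hge).
  set n := Num.sqrt _ in hz'.
  have hn : t ^+ 2 - eps <= n.
    by rewrite /n -{1}(ger0_norm (ltW te)) -sqrtr_sqr ler_sqrt // addr_ge0 // sqr_ge0.
  move: z' Lz' hz' => [x' y'] Lz' hz'.
  exists (n + r), x', y'; split => //.
  - lra.
  - have e3 : 0 <= t - 2 * r by lra.
    have e4 : 0 <= t + 2 * r - 1 by lra.
    have h := mulr_ge0 e3 e4.
    move: hn; rewrite /d; move: tk; rewrite /d => tk hn.
    rewrite -[k.+1]addn1 natrD mulrDl mul1r; nra.
apply: (@final_contra R M d (fun k => projT1 (cid (ind k)))) => // k.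
case: (cid (ind k)) => t [x [y [Lz ht t0 tk]]] /=; split.
  lra.
by rewrite -ht; have := HM _ Lz.
Qed.

End Main.

Theorem theorem4p14 (R : realType) (eps : R) :
  0 < eps -> eps <= 1 / 2 ->
  (r_bif ((- eps)%R%:C)%C <= (1 / 4 + eps - eps ^+ 2)%R%:E)%E.
Proof.
move=> e0 e2.
apply: ge_ereal_sup => _ [r [r0 [L [[[Lne [Lc Linv]] _] Lp]]] <-].
rewrite lee_fin leNgt; apply/negP => hr.
have [M HM] := @bounded_L R L Lc Lp.
have Hinv : forall (z c' : R[i]),
    (complex.Re c' + eps) ^+ 2 + (complex.Im c') ^+ 2 <= r ^+ 2 ->
    L (Some z) -> L (Some (z ^+ 2 + c')).
  move=> z c' hv Lz.
  have hg : Gcr ((- eps)%:C) r (fquad c').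
    by apply: gs_gen; exists c' => //; apply: valid_of.
  by apply: (Linv _ hg); exists (Some z).
have r4 : 1 / 4 < r.
  have e1 : 0 <= 1 - eps by lra.
  have hr' := hr; have := mulr_ge0 (ltW e0) e1; rewrite expr2 in hr'; nra.
have er : eps <= r.
  have e1 : 0 <= 1 / 2 - eps by lra.
  have hr' := hr; have := mulr_ge0 (ltW e0) e1; rewrite expr2 in hr'; nra.
case: Lne => -[z0|] Lz0; last by [].
move: z0 Lz0 => [x0 y0] Lz0.
case: (ltP (r ^+ 2) ((x0 ^+ 2 - y0 ^+ 2 - eps) ^+ 2 + (2 * x0 * y0) ^+ 2)) => hc.
  exact: (@big_case _ _ _ _ _ Hinv HM e0 e2 hr _ _ Lz0 hc).
apply: (@ray_case _ _ _ _ _ Hinv HM e0 er r4).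
have hv : (complex.Re (- ((x0 ^+ 2 - y0 ^+ 2) +i* (2 * x0 * y0))) + eps) ^+ 2 +
   complex.Im (- ((x0 ^+ 2 - y0 ^+ 2) +i* (2 * x0 * y0))) ^+ 2 <= r ^+ 2.
  rewrite /= (_ : (- (x0 ^+ 2 - y0 ^+ 2) + eps) ^+ 2 + (- (2 * x0 * y0)) ^+ 2 =
    (x0 ^+ 2 - y0 ^+ 2 - eps) ^+ 2 + (2 * x0 * y0) ^+ 2) //.
  by field.
have := Hinv _ _ hv Lz0.
by rewrite sqc addrN.
Qed.
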